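(* $\mathrm{Sort}(\mathrm{SC}_{1\underline{32}})$ is not a permutation class.
   Context: $\mathfrak S_n$ is the set of permutations of $\{1,\dots,n\}$. A permutation $\pi$ contains a (classical) permutation $\tau$ if some subsequence of $\pi$ has the same relative order as $\tau$. A permutation class is a set $\Pi$ of permutations such that every permutation contained in some $\pi\in\Pi$ is also in $\Pi$. A vincular pattern is a permutation with some entries underlined; a sequence contains it if it has a subsequence with the same relative order in which entries corresponding to adjacent underlined entries occupy consecutive positions. An occurrence of $1\underline{32}$ is $a_i a_j a_{j+1}$ with $i<j$ and $a_i<a_{j+1}<a_j$. For a pattern $\sigma$, the map $\mathrm{SC}_\sigma$ acts on $\tau$: read entries left to right; when the next entry $x$ is read, if pushing $x$ yields a stack whose entries read top to bottom (stack adjacency = consecutive positions) avoid $\sigma$, push $x$; otherwise pop the top stack entry to the output and repeat. At the end pop all remaining entries; the output is $\mathrm{SC}_\sigma(\tau)$. West's stack-sorting map is $s=\mathrm{SC}_{21}$. $\mathrm{Sort}_n(\mathrm{SC}_\sigma)=\{\tau\in\mathfrak S_n : s(\mathrm{SC}_\sigma(\tau))=12\cdots n\}$ and $\mathrm{Sort}(\mathrm{SC}_\sigma)=\bigcup_{n\ge1}\mathrm{Sort}_n(\mathrm{SC}_\sigma)$. *)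

(* Defs.v *)
From mathcomp Require Import all_boot.
Set Implicit Arguments. Unset Strict Implicit. Unset Printing Implicit Defensive.

Definition is_perm (n : nat) (s : seq nat) : bool := perm_eq s (iota 1 n).
Definition is_permutation (s : seq nat) : bool := (0 < size s) && is_perm (size s) s.

Definition order_iso (a b : seq nat) : Prop :=
  size a = size b /\
  forall i j, i < size a -> j < size a ->
    (nth 0 a i < nth 0 a j) = (nth 0 b i < nth 0 b j).

Definition contains (pi tau : seq nat) : Prop :=
  exists m : bitseq, size m = size pi /\ order_iso (mask m pi) tau.

Definition has21 (a : seq nat) : bool :=
  has (fun i => has (fun j => (i < j) && (nth 0 a j < nth 0 a i))
                      (iota 0 (size a))) (iota 0 (size a)).

Definition has1_32 (a : seq nat) : bool :=
  has (fun i => has (fun j =>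
     [&& i < j, j.+1 < size a, nth 0 a i < nth 0 a j.+1 & nth 0 a j.+1 < nth 0 a j])
     (iota 0 (size a))) (iota 0 (size a)).

(* The pattern-avoiding stack machine SC: the stack is a list read top to bottom
   (head = top).  [contP] decides whether a stack word contains the pattern. *)
Fixpoint push_elt (contP : seq nat -> bool) (x : nat) (stack out : seq nat)
  : seq nat * seq nat :=
  if ~~ contP (x :: stack) then (x :: stack, out)
  else match stack with
       | [::] => (x :: stack, out)   (* never reached: a single entry avoids *)
       | y :: st => push_elt contP x st (rcons out y)
       end.

Fixpoint SC_aux (contP : seq nat -> bool) (tau stack out : seq nat) : seq nat :=
  match tau with
  | [::] => out ++ stack
  | x :: t => let p := push_elt contP x stack out in SC_aux contP t p.1 p.2
  end.

Definition SC (contP : seq nat -> bool) (tau : seq nat) : seq nat :=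
  SC_aux contP tau [::] [::].

Definition west_s (tau : seq nat) : seq nat := SC has21 tau.

Definition Sort_n (n : nat) (tau : seq nat) : Prop :=
  is_perm n tau /\ west_s (SC has1_32 tau) = iota 1 n.

Definition Sort132 (tau : seq nat) : Prop := exists n, 1 <= n /\ Sort_n n tau.

Definition perm_class (Pi : seq nat -> Prop) : Prop :=
  (forall pi, Pi pi -> is_permutation pi) /\
  (forall pi tau, Pi pi -> is_permutation tau -> contains pi tau -> Pi tau).

(* Main.v *)
Require Import Defs.
From mathcomp Require Import all_boot.

Theorem mainTheorem18 : ~ perm_class Sort132.
Proof.
move=> [_ H2].
have Hp : Sort132 [:: 2; 4; 1; 3].
  exists 4; split; first by []; split; first by []; by vm_compute.
have Ht := H2 _ [:: 1; 3; 2] Hp isT.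
have : Sort132 [:: 1; 3; 2].
  apply: Ht; exists [:: true; true; false; true]; split => //; split => //.
  move=> i j.
  by case: i => [|[|[|i]]] //; case: j => [|[|[|j]]].
move=> [n [_ [Hperm Hs]]].
have En := perm_size Hperm; rewrite size_iota /= in En.
by subst n; move: Hs; vm_compute.
Qed.
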